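(* Suppose Assumption A holds with $\beta,\gamma\in(0,\infty)$. Fix $\mu>0$ and $\sigma\in\mathcal X$, and let $\pi^{\mu,\sigma}$ be a perturbed equilibrium. Let $(\pi^t)_{t\ge0}$ be a sequence in $\mathcal X$, let $(\eta_t)$ be positive reals, and let $\xi_i^t\in\mathbb R^{d_i}$ be arbitrary vectors, such that for all $t\ge0$ $$D_\psi(\pi^{\mu,\sigma},\pi^{t+1})-D_\psi(\pi^{\mu,\sigma},\pi^t)+D_\psi(\pi^{t+1},\pi^t)\le\eta_t\sum_{i=1}^N\langle\nabla_{\pi_i}v_i(\pi^t)-\mu\nabla_{\pi_i}G(\pi_i^t,\sigma_i)+\xi_i^t,\pi_i^{t+1}-\pi_i^{\mu,\sigma}\rangle.$$ Then for all $t\ge0$, $$D_\psi(\pi^{\mu,\sigma},\pi^{t+1})-D_\psi(\pi^{\mu,\sigma},\pi^t)+D_\psi(\pi^{t+1},\pi^t)\le\eta_t\Big(\frac{\mu^2\gamma\rho^2(\gamma+2\beta)+8L^2}{2\mu\gamma\rho^2}D_\psi(\pi^{t+1},\pi^t)-\frac{\mu\gamma}2D_\psi(\pi^{\mu,\sigma},\pi^t)\Big)+\eta_t\sum_{i=1}^N\langle\xi_i^t,\pi_i^{t+1}-\pi_i^{\mu,\sigma}\rangle.$$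
   Context: Game. Let $N\ge1$. For each $i\in[N]$, $\mathcal X_i\subseteq\mathbb R^{d_i}$ is a nonempty compact convex set, and $\mathcal X=\prod_i\mathcal X_i$. Each $v_i:\mathcal X\to\mathbb R$ is differentiable, with block gradient $\nabla_{\pi_i}v_i$. The norm is Euclidean, with $\|\pi\|^2=\sum_i\|\pi_i\|^2$. The game is monotone: $\sum_i\langle\nabla_{\pi_i}v_i(\pi)-\nabla_{\pi_i}v_i(\pi'),\pi_i-\pi_i'\rangle\le0$. The game is $L$-smooth: $\sum_i\|\nabla_{\pi_i}v_i(\pi)-\nabla_{\pi_i}v_i(\pi')\|^2\le L^2\|\pi-\pi'\|^2$. Regularizer. $\psi:\mathcal X_i\to\mathbb R$ is differentiable and $\rho$-strongly convex with respect to $\|\cdot\|$. Bregman divergence: $D_\psi(x,y)=\psi(x)-\psi(y)-\langle\nabla\psi(y),x-y\rangle$, and $D_\psi(\pi,\pi')=\sum_iD_\psi(\pi_i,\pi_i')$. Perturbation. $G:\mathcal X_i\times\mathcal X_i\to[0,\infty)$ is differentiable in its first argument, with gradient $\nabla_{\pi_i}G$ in that argument. $G(\cdot,\sigma_i)$ is strictly convex with minimum $0$ at $\sigma_i$. For $\mu>0$ and $\sigma\in\mathcal X$, $\pi^{\mu,\sigma}$ is a profile with $\pi_i^{\mu,\sigma}\in\arg\max_{\pi_i}\{v_i(\pi_i,\pi^{\mu,\sigma}_{-i})-\mu G(\pi_i,\sigma_i)\}$ for all $i$. Assumption A: for all $\sigma_i,\pi_i,\pi_i'\in\mathcal X_i$,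 $$\gamma D_\psi(\pi_i',\pi_i)\le G(\pi_i',\sigma_i)-G(\pi_i,\sigma_i)-\langle\nabla_{\pi_i}G(\pi_i,\sigma_i),\pi_i'-\pi_i\rangle\le\beta D_\psi(\pi_i',\pi_i).$$ *)

(* Defs.v *)
From HB Require Import structures.
From mathcomp Require Import all_boot all_order all_algebra.
From mathcomp Require Import all_classical all_reals all_analysis.
Set Implicit Arguments. Unset Strict Implicit. Unset Printing Implicit Defensive.
Import Order.TTheory GRing.Theory Num.Theory.
Import numFieldNormedType.Exports.
Local Open Scope classical_set_scope.
Local Open Scope ring_scope.

Definition dotr {R : realType} {n : nat} (u w : 'rV[R]_n) : R :=
  \sum_(k < n) u 0 k * w 0 k.

Definition sqn {R : realType} {n : nat} (u : 'rV[R]_n) : R := dotr u u.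

Definition is_grad {R : realType} {n : nat} (f : 'rV[R]_n -> R^o)
    (x g : 'rV[R]_n) : Prop :=
  differentiable f x /\ forall h, 'd f x h = dotr g h.

Definition convex_rV {R : realType} {n : nat} (A : set 'rV[R]_n) : Prop :=
  forall x y (t : R), A x -> A y -> 0 <= t -> t <= 1 ->
    A (t *: x + (1 - t) *: y).

Definition prof (R : realType) (N : nat) (d : 'I_N -> nat) : Type :=
  forall i : 'I_N, 'rV[R]_(d i).

Definition in_prof {R : realType} {N : nat} {d : 'I_N -> nat}
    (X : forall i : 'I_N, set 'rV[R]_(d i)) (p : prof R d) : Prop :=
  forall i, X i (p i).

(* unilateral deviation (x_i, p_{-i}) *)
Definition upd {R : realType} {N : nat} {d : 'I_N -> nat}
    (p : prof R d) (i : 'I_N) (x : 'rV[R]_(d i)) : prof R d :=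
  fun j => match i =P j with
           | ReflectT e => eq_rect i (fun k => 'rV[R]_(d k)) x j e
           | ReflectF _ => p j
           end.

Definition bregman {R : realType} {n : nat} (psi : 'rV[R]_n -> R)
    (gpsi : 'rV[R]_n -> 'rV[R]_n) (x y : 'rV[R]_n) : R :=
  psi x - psi y - dotr (gpsi y) (x - y).

Definition bregman_prof {R : realType} {N : nat} {d : 'I_N -> nat}
    (psi : forall i : 'I_N, 'rV[R]_(d i) -> R)
    (gpsi : forall i : 'I_N, 'rV[R]_(d i) -> 'rV[R]_(d i))
    (p q : prof R d) : R :=
  \sum_(i < N) bregman (psi i) (gpsi i) (p i) (q i).

(* Main.v *)
Require Import Defs.
From HB Require Import structures.
From mathcomp Require Import all_boot all_order all_algebra.
From mathcomp Require Import all_classical all_reals all_analysis.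
From mathcomp Require Import ring lra.
Import Order.TTheory GRing.Theory Num.Theory.
Import numFieldNormedType.Exports.
Local Open Scope classical_set_scope.
Local Open Scope ring_scope.

Lemma fo_max {R : realType} n (f : 'rV[R]_n -> R^o) (x v : 'rV[R]_n) :
  differentiable f x ->
  (forall t : R, 0 < t -> t <= 1 -> f (t *: v + x) <= f x) -> 'd f x v <= 0.
Proof.
move=> df H; rewrite -deriveE //.
have dv : derivable f x v by exact: diff_derivable.
rewrite /derive (cvg_at_rightE _ _ dv).
set q := (fun h : R => _).
have cq : q @ 0^'+ --> lim (q @ 0^'+).
  apply: cvgP; apply: cvg_trans dv; apply: cvg_fmap2.
  move=> A /=; rewrite /dnbhs /at_right /within /=; apply: filterS => y hA y0.
  by apply: hA; rewrite gt_eqF.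
apply: (cvgr_to_le cq).
near=> h.
have h0 : 0 < h by near: h; exact: nbhs_right_gt.
have h1 : h <= 1 by near: h; exact: nbhs_right_le.
rewrite /q /= -[_ *: _]/(h^-1 * _) pmulr_rle0 ?invr_gt0 // subr_le0.
exact: H.
Unshelve. all: by end_near.
Qed.

Lemma fo_max2 {R : realType} n (f1 f2 : 'rV[R]_n -> R^o) (mu : R) (x v : 'rV[R]_n) :
  differentiable f1 x -> differentiable f2 x ->
  (forall t : R, 0 < t -> t <= 1 ->
     f1 (t *: v + x) - mu * f2 (t *: v + x) <= f1 x - mu * f2 x) ->
  'd f1 x v - mu * 'd f2 x v <= 0.
Proof.
move=> d1 d2 H.
have d2' : differentiable (mu *: f2) x by exact: differentiableZ.
have := @fo_max R n (f1 - mu *: f2) x v (differentiableB d1 d2') H.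
by rewrite diffB // diffZ.
Qed.

Lemma upd_same {R : realType} {N : nat} {d : 'I_N -> nat} (p : prof R d) i :
  @upd R N d p i (p i) = p.
Proof.
apply: functional_extensionality_dep => j; rewrite /upd.
by case: eqP => // e; case: j / e.
Qed.

Section Dot.
Variables (R : realType) (n : nat).
Implicit Types a b c : 'rV[R]_n.

Lemma dotrDl a b c : dotr (a + b) c = dotr a c + dotr b c.
Proof. by rewrite /dotr -big_split; apply: eq_bigr => k _; rewrite !mxE mulrDl. Qed.
Lemma dotrBl a b c : dotr (a - b) c = dotr a c - dotr b c.
Proof. by rewrite /dotr -sumrB; apply: eq_bigr => k _; rewrite !mxE mulrBl. Qed.
Lemma dotrDr a b c : dotr c (a + b) = dotr c a + dotr c b.
Proof. by rewrite /dotr -big_split; apply: eq_bigr => k _; rewrite !mxE mulrDr. Qed.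
Lemma dotrBr a b c : dotr c (a - b) = dotr c a - dotr c b.
Proof. by rewrite /dotr -sumrB; apply: eq_bigr => k _; rewrite !mxE mulrBr. Qed.
Lemma dotrNl a b : dotr (- a) b = - dotr a b.
Proof. by rewrite /dotr -sumrN; apply: eq_bigr => k _; rewrite !mxE mulNr. Qed.
Lemma dotrNr a b : dotr a (- b) = - dotr a b.
Proof. by rewrite /dotr -sumrN; apply: eq_bigr => k _; rewrite !mxE mulrN. Qed.
Lemma dotrZl (m : R) a b : dotr (m *: a) b = m * dotr a b.
Proof. by rewrite /dotr mulr_sumr; apply: eq_bigr => k _; rewrite !mxE mulrA. Qed.
Lemma sqn_ge0 a : 0 <= sqn a.
Proof. by rewrite /sqn /dotr; apply: sumr_ge0 => k _; rewrite -expr2 sqr_ge0. Qed.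
Lemma sqnB a b : sqn (a - b) = sqn (b - a).
Proof. by rewrite /sqn /dotr; apply: eq_bigr => k _; rewrite !mxE; ring. Qed.
Lemma young a b (s : R) : 0 < s -> dotr a b <= s / 2 * sqn a + 1 / (2 * s) * sqn b.
Proof.
move=> s0; rewrite /sqn /dotr !mulr_sumr -big_split /=; apply: ler_sum => k _.
set u := a 0 k; set w := b 0 k.
rewrite -subr_ge0.
have -> : s / 2 * (u * u) + 1 / (2 * s) * (w * w) - u * w = (s * u - w) ^+ 2 / (2 * s).
  by field; rewrite gt_eqF.
by apply: divr_ge0; [exact: sqr_ge0 | rewrite mulr_ge0 // ltW].
Qed.
End Dot.

Lemma final_arith (R : realType) (L rho beta gamma mu eta Dpx Dyx Dyp Q W A M Cr Eq Gt Xi lhs : R) :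
  0 < rho -> 0 < beta -> 0 < gamma -> 0 < mu -> 0 < eta ->
  0 <= Dyx -> 0 <= Dyp -> rho / 2 * Q <= Dpx -> rho / 2 * W <= Dyx ->
  A <= L ^+ 2 * Q -> 0 <= Q -> 0 <= W -> M <= 0 -> Eq <= 0 ->
  gamma * Dpx + gamma * Dyp - beta * Dyx <= Gt ->
  (forall s, 0 < s -> Cr <= s / 2 * A + 1 / (2 * s) * W) ->
  lhs <= eta * (M + Cr - mu * Gt + Eq + Xi) ->
  lhs <= eta * ((mu ^+ 2 * gamma * rho ^+ 2 * (gamma + 2 * beta) + 8 * L ^+ 2)
                   / (2 * mu * gamma * rho ^+ 2) * Dyx
                 - mu * gamma / 2 * Dpx) + eta * Xi.
Proof.
move=> r0 b0 g0 m0 e0 Dyx0 Dyp0 hQ hW hA Q0 W0 hM hE hG hC hl.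
set c := mu * gamma * rho.
have c0 : 0 < c by rewrite !mulr_gt0.
have L0 : 0 <= L ^+ 2 by exact: sqr_ge0.
set den := 4 * L ^+ 2 + c ^+ 2.
have den0 : 0 < den by rewrite /den; nra.
set s := 2 * c / den.
have s0 : 0 < s by rewrite /s divr_gt0 // mulr_gt0.
have hC' := hC s s0.
have st1 : s / 2 * A <= mu * gamma / 2 * Dpx.
  apply: (le_trans (y := s / 2 * (L ^+ 2 * Q))).
    by rewrite ler_wpM2l // ltW // divr_gt0.
  have e1 : s / 2 * (L ^+ 2 * Q) = (c * L ^+ 2 / den) * Q.
    by rewrite /s; field; rewrite gt_eqF.
  have e2 : c * L ^+ 2 / den <= c / 4.
    rewrite ler_pdivrMr //.
    have -> : c / 4 * den = c * L ^+ 2 + c ^+ 3 / 4 by rewrite /den; field.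
    rewrite lerDl; apply: divr_ge0 => //; apply: exprn_ge0; exact: ltW.
  rewrite e1; apply: (le_trans (y := c / 4 * Q)); first by rewrite ler_wpM2r.
  have -> : c / 4 * Q = mu * gamma / 2 * (rho / 2 * Q) by rewrite /c; field.
  by rewrite ler_wpM2l // divr_ge0 // ?mulr_ge0 // ltW.
have mgr : 0 < mu * gamma * rho ^+ 2 by rewrite !mulr_gt0 // exprn_gt0.
have st2 : 1 / (2 * s) * W <= (mu * gamma / 2 + 2 * L ^+ 2 / (mu * gamma * rho ^+ 2)) * Dyx.
  have -> : 1 / (2 * s) * W = (mu * gamma / 2 + 2 * L ^+ 2 / (mu * gamma * rho ^+ 2)) * (rho / 2 * W).
    rewrite /s /den /c; field.
    by apply/and4P; split; rewrite gt_eqF.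
  rewrite ler_wpM2l //; apply: addr_ge0; first by rewrite divr_ge0 // mulr_ge0 // ltW.
  by apply: divr_ge0; [exact: mulr_ge0 | exact: ltW].
have eC : (mu ^+ 2 * gamma * rho ^+ 2 * (gamma + 2 * beta) + 8 * L ^+ 2)
                   / (2 * mu * gamma * rho ^+ 2)
   = mu * beta + (mu * gamma / 2 + 2 * L ^+ 2 / (mu * gamma * rho ^+ 2))
     + 2 * L ^+ 2 / (mu * gamma * rho ^+ 2).
  by field; rewrite !gt_eqF.
set K := 2 * L ^+ 2 / (mu * gamma * rho ^+ 2) in st2 eC.
have K0 : 0 <= K by apply: divr_ge0; [exact: mulr_ge0 | exact: ltW].
have hG' : mu * (gamma * Dpx + gamma * Dyp - beta * Dyx) <= mu * Gt by rewrite ler_wpM2l // ltW.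
have key : M + Cr - mu * Gt + Eq <=
   (mu * beta + (mu * gamma / 2 + K) + K) * Dyx - mu * gamma / 2 * Dpx.
  have KD : 0 <= K * Dyx by exact: mulr_ge0.
  have gD : 0 <= mu * gamma * Dyp by rewrite mulr_ge0 // mulr_ge0 // ltW.
  move: hG'; rewrite !mulrDr !mulrDl !mulrA mulrN mulrA; move=> hG'.
  lra.
rewrite eC -mulrDr; apply: (le_trans hl); rewrite (ler_wpM2l (ltW e0)); lra.
Qed.

Theorem lemma4 (R : realType) (N : nat) (d : 'I_N -> nat)
  (X : forall i : 'I_N, set 'rV[R]_(d i))
  (v : 'I_N -> prof R d -> R)
  (gv : forall i : 'I_N, prof R d -> 'rV[R]_(d i))
  (psi : forall i : 'I_N, 'rV[R]_(d i) -> R)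
  (gpsi : forall i : 'I_N, 'rV[R]_(d i) -> 'rV[R]_(d i))
  (G : forall i : 'I_N, 'rV[R]_(d i) -> 'rV[R]_(d i) -> R)
  (gG : forall i : 'I_N, 'rV[R]_(d i) -> 'rV[R]_(d i) -> 'rV[R]_(d i))
  (L rho beta gamma mu : R)
  (sigma pms : prof R d) (pi : nat -> prof R d) (eta : nat -> R)
  (xi : nat -> forall i : 'I_N, 'rV[R]_(d i)) :
  (* the game *)
  (0 < N)%N ->
  (forall i, X i !=set0) ->
  (forall i, compact (X i)) ->
  (forall i, convex_rV (X i)) ->
  (forall i p, in_prof X p -> is_grad (fun x : 'rV[R]_(d i) => v i (@upd R N d p i x)) (p i) (gv i p)) ->
  (forall p q, in_prof X p -> in_prof X q ->
     \sum_(i < N) dotr (gv i p - gv i q) (p i - q i) <= 0) ->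
  (forall p q, in_prof X p -> in_prof X q ->
     \sum_(i < N) sqn (gv i p - gv i q) <= L ^+ 2 * \sum_(i < N) sqn (p i - q i)) ->
  (* the regularizer *)
  0 < rho ->
  (forall i x, X i x -> is_grad (psi i) x (gpsi i x)) ->
  (forall i x y, X i x -> X i y ->
     psi i x + dotr (gpsi i x) (y - x) + rho / 2 * sqn (y - x) <= psi i y) ->
  (* the perturbation *)
  (forall i x s, X i x -> X i s -> is_grad (fun y => G i y s) x (gG i x s)) ->
  (forall i x s, X i x -> X i s -> 0 <= G i x s) ->
  (forall i s, X i s -> G i s s = 0) ->
  (forall i s x y (t : R), X i s -> X i x -> X i y -> x != y -> 0 < t -> t < 1 ->
     G i (t *: x + (1 - t) *: y) s < t * G i x s + (1 - t) * G i y s) ->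
  (* Assumption A *)
  0 < beta -> 0 < gamma ->
  (forall i s p p', X i s -> X i p -> X i p' ->
     gamma * bregman (psi i) (gpsi i) p' p
       <= G i p' s - G i p s - dotr (gG i p s) (p' - p)
     /\ G i p' s - G i p s - dotr (gG i p s) (p' - p)
       <= beta * bregman (psi i) (gpsi i) p' p) ->
  (* perturbed equilibrium *)
  0 < mu ->
  in_prof X sigma ->
  in_prof X pms ->
  (forall i x, X i x ->
     v i (@upd R N d pms i x) - mu * G i x (sigma i) <= v i pms - mu * G i (pms i) (sigma i)) ->
  (* the iterates *)
  (forall t, in_prof X (pi t)) ->
  (forall t, 0 < eta t) ->
  (forall t : nat,
     bregman_prof psi gpsi pms (pi t.+1) - bregman_prof psi gpsi pms (pi t)
       + bregman_prof psi gpsi (pi t.+1) (pi t)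
     <= eta t * \sum_(i < N) dotr (gv i (pi t) - mu *: gG i (pi t i) (sigma i) + xi t i)
                                  (pi t.+1 i - pms i)) ->
  forall t : nat,
     bregman_prof psi gpsi pms (pi t.+1) - bregman_prof psi gpsi pms (pi t)
       + bregman_prof psi gpsi (pi t.+1) (pi t)
     <= eta t * ((mu ^+ 2 * gamma * rho ^+ 2 * (gamma + 2 * beta) + 8 * L ^+ 2)
                   / (2 * mu * gamma * rho ^+ 2) * bregman_prof psi gpsi (pi t.+1) (pi t)
                 - mu * gamma / 2 * bregman_prof psi gpsi pms (pi t))
        + eta t * \sum_(i < N) dotr (xi t i) (pi t.+1 i - pms i).
Proof.
move=> hN hne hcpt hcvx hgv hmono hsmooth r0 hpsig hsc hGg hG0 hGs hstrict b0 g0 hA m0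
  hsig hpms heq hpi heta hstep t.
have hl := hstep t.
move: hl.
move: (hpi t) (hpi t.+1) => hx hy.
move: (pi t) (pi t.+1) hx hy => x y hx hy hl.
set p := pms.
have hbr : forall i a b, X i a -> X i b ->
    rho / 2 * sqn (a - b) <= bregman (psi i) (gpsi i) a b.
  move=> i a b Ha Hb; have := hsc i b a Hb Ha; rewrite /bregman; lra.
have br0 : forall i a b, X i a -> X i b -> 0 <= bregman (psi i) (gpsi i) a b.
  move=> i a b Ha Hb; apply: le_trans (hbr i a b Ha Hb).
  by rewrite mulr_ge0 ?sqn_ge0 // divr_ge0 // ltW.
have hid : forall i,
  dotr (gv i x - mu *: gG i (x i) (sigma i) + xi t i) (y i - p i) =
    dotr (gv i x - gv i p) (x i - p i) + dotr (gv i x - gv i p) (y i - x i)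
    - mu * dotr (gG i (x i) (sigma i) - gG i (p i) (sigma i)) (y i - p i)
    + dotr (gv i p - mu *: gG i (p i) (sigma i)) (y i - p i)
    + dotr (xi t i) (y i - p i).
  move=> i; rewrite !(dotrDl, dotrNl, dotrZl, dotrDr, dotrNr); ring.
rewrite (eq_bigr _ (fun i _ => hid i)) !big_split /= sumrN -mulr_sumr in hl.
have hfo : forall i,
  dotr (gv i p - mu *: gG i (p i) (sigma i)) (y i - p i) <= 0.
  move=> i; rewrite dotrBl dotrZl.
  have [d1 e1] := hgv i p hpms.
  have [d2 e2] := hGg i (p i) (sigma i) (hpms i) (hsig i).
  rewrite -e1 -e2.
  apply: (@fo_max2 _ _ _ _ mu (p i) (y i - p i) d1 d2) => t0 h0 h1 /=.
  rewrite upd_same; apply: heq.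
  have -> : t0 *: (y i - p i) + p i = t0 *: y i + (1 - t0) *: p i.
    by rewrite scalerBr scalerBl scale1r [p i - _]addrC addrA.
  by apply: hcvx => //; rewrite ltW.
have hGt : forall i,
  gamma * bregman (psi i) (gpsi i) (p i) (x i)
  + gamma * bregman (psi i) (gpsi i) (y i) (p i)
  - beta * bregman (psi i) (gpsi i) (y i) (x i)
  <= dotr (gG i (x i) (sigma i) - gG i (p i) (sigma i)) (y i - p i).
  move=> i.
  have [h1 _] := hA i (sigma i) (x i) (p i) (hsig i) (hx i) (hpms i).
  have [h2 _] := hA i (sigma i) (p i) (y i) (hsig i) (hpms i) (hy i).
  have [_ h3] := hA i (sigma i) (x i) (y i) (hsig i) (hx i) (hy i).
  have -> : dotr (gG i (x i) (sigma i) - gG i (p i) (sigma i)) (y i - p i) =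
    (G i (p i) (sigma i) - G i (x i) (sigma i) - dotr (gG i (x i) (sigma i)) (p i - x i))
    + (G i (y i) (sigma i) - G i (p i) (sigma i) - dotr (gG i (p i) (sigma i)) (y i - p i))
    - (G i (y i) (sigma i) - G i (x i) (sigma i) - dotr (gG i (x i) (sigma i)) (y i - x i)).
    rewrite !(dotrDl, dotrNl, dotrZl, dotrDr, dotrNr); ring.
  lra.
apply: (@final_arith R L rho beta gamma mu (eta t) _ _
  (bregman_prof psi gpsi y p)
  (\sum_(i < N) sqn (x i - p i))
  (\sum_(i < N) sqn (y i - x i))
  (\sum_(i < N) sqn (gv i x - gv i p))
  (\sum_(i < N) dotr (gv i x - gv i p) (x i - p i))
  (\sum_(i < N) dotr (gv i x - gv i p) (y i - x i))
  (\sum_(i < N) dotr (gv i p - mu *: gG i (p i) (sigma i)) (y i - p i))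
  (\sum_(i < N) dotr (gG i (x i) (sigma i) - gG i (p i) (sigma i)) (y i - p i)))
  => //.
- by apply: sumr_ge0 => i _; apply: br0.
- by apply: sumr_ge0 => i _; apply: br0.
- rewrite mulr_sumr /bregman_prof; apply: ler_sum => i _.
  by rewrite sqnB; apply: hbr.
- rewrite mulr_sumr /bregman_prof; apply: ler_sum => i _.
  by apply: hbr.
- exact: hsmooth.
- by apply: sumr_ge0 => i _; apply: sqn_ge0.
- by apply: sumr_ge0 => i _; apply: sqn_ge0.
- exact: hmono.
- by apply: sumr_le0 => i _; apply: hfo.
- rewrite /bregman_prof !mulr_sumr -big_split -sumrB; apply: ler_sum => i _.
  exact: hGt.
- move=> s s0; rewrite !mulr_sumr -big_split; apply: ler_sum => i _.
  exact: young.
Qed.
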